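(* Let $1\le k\le N-1$ satisfy $\phi^{k-1}-\phi^k>\phi^k-\phi^{k+1}$, let $F\in\tilde{\mathcal F}^k$, let $\mathcal U$ be an unlabeled atom of $\mathfrak A_k$, and let $\mathcal X$ be the vertex set of an arbitrary weakly connected component of the induced subgraph $F|_{\mathcal U}$. Then: (1) there is a forest $H\in\tilde{\mathcal F}^k$ such that the arcs leaving the vertices of $\mathcal X$ are the same in $F$ and $H$, and no arc of $H$ enters $\mathcal X$; (2) for every $G\in\tilde{\mathcal F}^k$ one has $\Upsilon^G_{\mathcal X}=\Upsilon^F_{\mathcal X}$; moreover, if the graph $F'=F^G_{\uparrow\mathcal X}$ is a forest (in particular, if no arc of $F$ enters $\mathcal X$), then $F'\in\tilde{\mathcal F}^k$; (3) if $G$ is any spanning forest of $V$ in which every vertex of $\mathcal X$ has an outgoing arc, then $\Upsilon^G_{\mathcal X}\ge\Upsilon^F_{\mathcal X}$; and if $\Upsilon^G_{\mathcal X}=\Upsilon^F_{\mathcal X}$, then there is $F'\in\tilde{\mathcal F}^k$ such that the arcs leaving the vertices of $\mathcal X$ in $G$ and in $F'$ coincide.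
   Context: $V$ is a digraph with vertex set $\mathcal N$, $|\mathcal N|=N$, real arc weights $v_{ij}$, having at least one spanning tree. An (entering) forest is a digraph in which every vertex has at most one outgoing arc and there is no directed cycle; its weakly connected components are trees, each with a root (the unique vertex with no outgoing arc). $\mathcal F^k$ is the set of spanning forests of $V$ with exactly $k$ trees. For a subgraph $G$ and $\mathcal S\subseteq\mathcal N$, $\Upsilon^G_{\mathcal S}=\sum v_{ij}$ over arcs $(i,j)$ of $G$ with $i\in\mathcal S$, and $\Upsilon^G=\Upsilon^G_{\mathcal N}$. $\phi^k=\min_{\mathcal F^k}\Upsilon^F$, $\phi^0=\infty$; $\tilde{\mathcal F}^k$ the forests in $\mathcal F^k$ of weight $\phi^k$. $\mathfrak A_k$ is the algebra of subsets of $\mathcal N$ generated by the vertex sets of trees of forests in $\tilde{\mathcal F}^k$; atoms are its minimal nonempty elements; an atom is unlabeled if it contains no root of any forest of $\tilde{\mathcal F}^k$. $F|_{\mathcal U}$ is the induced subgraph. An arc enters $\mathcal X$ if its head is in $\mathcal X$ and tail is not. $G^F_{\uparrow\mathcal S}$ is the graph obtained from $G$ by replacing the arcs leaving the vertices of $\mathcal S$ by the arcs leaving the same vertices in $F$ (so $F^G_{\uparrow\mathcal X}$ has the arcs of $G$ at vertices of $\mathcal X$ and those of $F$ elsewhere). *)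

(* Defs.v *)
From HB Require Import structures.
From mathcomp Require Import all_boot all_order all_algebra.

Set Implicit Arguments.
Unset Strict Implicit.
Unset Printing Implicit Defensive.

Import Order.TTheory GRing.Theory Num.Theory.
Local Open Scope ring_scope.

(* The digraph V has vertex set T (a finType, N = #|T|), arc relation adj,
   and real arc weights v i j (only meaningful on arcs).

   A subgraph of V in which every vertex has at most one outgoing arc is
   represented by its successor function  F : {ffun T -> option T}:
   F i = Some j  iff  (i,j) is an arc of F;  F i = None  iff i has no
   outgoing arc (i is a root). *)
Definition sgraph (T : finType) := {ffun T -> option T}.

Section Defs.
Variables (T : finType) (R : realFieldType) (adj : rel T) (v : T -> T -> R).

Definition arcrel (F : sgraph T) : rel T := fun i j => F i == Some j.
Definition weakrel (F : sgraph T) : rel T :=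
  fun i j => arcrel F i j || arcrel F j i.

Definition subgraph_of_V (F : sgraph T) : bool :=
  [forall i, if F i is Some j then adj i j else true].

Definition acyclic (F : sgraph T) : bool :=
  [forall i, [forall j, arcrel F i j ==> ~~ connect (arcrel F) j i]].

Definition is_forest (F : sgraph T) : bool := subgraph_of_V F && acyclic F.

Definition ntrees (F : sgraph T) : nat := n_comp (weakrel F) T.

Definition forest_k (k : nat) (F : sgraph T) : bool :=
  is_forest F && (ntrees F == k).

Definition Ups (F : sgraph T) (S : {set T}) : R :=
  \sum_(i in S) (if F i is Some j then v i j else 0).

Definition UpsT (F : sgraph T) : R := Ups F setT.

(* min on R extended by None = +infinity *)
Definition omin (a b : option R) : option R :=
  match a, b with
  | None, x => x
  | x, None => x
  | Some x, Some y => Some (Num.min x y)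
  end.

(* phi^k = min over \mathcal F^k of Upsilon^F ; None stands for +infinity
   (the empty minimum, e.g. phi^0 = infinity) *)
Definition phi (k : nat) : option R :=
  \big[omin/None]_(F : sgraph T | forest_k k F) Some (UpsT F).

Definition tildeF (k : nat) (F : sgraph T) : bool :=
  forest_k k F && (phi k == Some (UpsT F)).

(* phi^{k-1} - phi^k > phi^k - phi^{k+1}, with phi^{k-1} = infinity allowed *)
Definition gap_cond (k : nat) : Prop :=
  match phi k.-1, phi k, phi k.+1 with
  | None, Some _, Some _ => True
  | Some a, Some b, Some c => b - c < a - b
  | _, _, _ => False
  end.

Definition tree_set (F : sgraph T) (x : T) : {set T} :=
  [set y | connect (weakrel F) x y].

Definition gen (k : nat) (A : {set T}) : Prop :=
  exists F x, tildeF k F /\ A = tree_set F x.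

Definition is_algebra (S : {set {set T}}) : Prop :=
  [/\ setT \in S,
      (forall A, A \in S -> ~: A \in S) &
      (forall A B, A \in S -> B \in S -> A :|: B \in S)].

Definition in_Ak (k : nat) (A : {set T}) : Prop :=
  forall S : {set {set T}}, is_algebra S ->
    (forall B, gen k B -> B \in S) -> A \in S.

Definition atom (k : nat) (U : {set T}) : Prop :=
  [/\ in_Ak k U, U != set0 &
      forall W, in_Ak k W -> W \subset U -> W = set0 \/ W = U].

Definition unlabeled (k : nat) (U : {set T}) : Prop :=
  forall F x, tildeF k F -> x \in U -> F x != None.

Definition indrel (F : sgraph T) (U : {set T}) : rel T :=
  fun i j => [&& i \in U, j \in U & weakrel F i j].

Definition is_component (F : sgraph T) (U X : {set T}) : Prop :=
  exists2 x, x \in U & X = [set y | connect (indrel F U) x y].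

Definition enters (F : sgraph T) (X : {set T}) : Prop :=
  exists i j, [/\ F i = Some j, j \in X & i \notin X].

Definition override (F G : sgraph T) (X : {set T}) : sgraph T :=
  [ffun i => if i \in X then G i else F i].

End Defs.

(* Main.v *)
Require Import Defs.
From HB Require Import structures.
From mathcomp Require Import all_boot all_order all_algebra.
From mathcomp Require Import zify lra.
Import Order.TTheory GRing.Theory Num.Theory.
Local Open Scope ring_scope.

Set Implicit Arguments.
Unset Strict Implicit.
Unset Printing Implicit Defensive.

Section Forest.
Variable T : finType.
Implicit Types (F P Q : sgraph T).

Definition step F (i : T) : T := if F i is Some j then j else i.
Definition rho F (i : T) : T := iter #|T| (step F) i.
Definition rootset F : {set T} := [set i | F i == None].
Definition reachc F (x : T) : nat := #|[set y | connect (arcrel F) x y]|.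

Lemma conn_iter F x m : connect (arcrel F) x (iter m (step F) x).
Proof.
elim: m => [|m IH] //=; apply: (connect_trans IH).
rewrite /step; case E: (F _) => [j|] //.
by apply: connect1; rewrite /arcrel E.
Qed.

Lemma reachc_dec F i j : acyclic F -> F i = Some j -> (reachc F j < reachc F i)%N.
Proof.
move=> /forallP Ha Fij; apply: proper_card; apply/properP; split.
  apply/subsetP => y; rewrite !inE => Hy; apply: connect_trans Hy.
  by apply: connect1; rewrite /arcrel Fij.
exists i; rewrite !inE ?connect0 //.
by have /forallP/(_ j) := Ha i; rewrite /arcrel Fij eqxx.
Qed.

Lemma reachc_pos F x : (0 < reachc F x)%N.
Proof. by apply/card_gt0P; exists x; rewrite inE connect0. Qed.

Lemma reachc_le F x : (reachc F x <= #|T|)%N.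
Proof. exact: max_card. Qed.

Lemma height_acyclic F (h : T -> nat) :
  (forall i j, F i = Some j -> (h j < h i)%N) -> acyclic F.
Proof.
move=> Hh; apply/forallP => i; apply/forallP => j; apply/implyP => /eqP Fij.
apply/negP => /connectP [p pth Hl].
have : (h (last j p) <= h j)%N.
  elim: p j pth {Hl Fij} => //= c p IH j /andP [/eqP Hjc pth].
  by apply: leq_trans (IH _ pth) _; apply: ltnW; apply: Hh.
by rewrite -Hl; move: (Hh _ _ Fij); lia.
Qed.

Lemma rho_root F i : acyclic F -> F (rho F i) = None.
Proof.
move=> Ha.
have H : forall m, F (iter m (step F) i) != None ->
   (reachc F (iter m (step F) i) + m <= reachc F i)%N.
  elim => [|m IH]; first by rewrite addn0.
  rewrite iterS; set a := iter m (step F) i; rewrite /step.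
  case E: (F a) => [j|] /=.
    move=> _; have := reachc_dec Ha E; rewrite E in IH; have := IH isT; rewrite /a; lia.
  by rewrite E.
case E: (F _) => [j|] //.
have := H #|T|; rewrite /rho in E; rewrite E => /(_ isT).
have := reachc_pos F (iter #|T| (step F) i); have := reachc_le F i; lia.
Qed.

Lemma rho_fix F r : F r = None -> rho F r = r.
Proof. by move=> Fr; apply: iter_fix; rewrite /step Fr. Qed.

Lemma rho_step F i j : acyclic F -> F i = Some j -> rho F j = rho F i.
Proof.
move=> Ha Fij; rewrite /rho.
have -> : j = step F i by rewrite /step Fij.
rewrite -iterSr iterS; rewrite /step rho_root //.
Qed.

Lemma weakrel_sym F : symmetric (weakrel F).
Proof. by move=> x y; rewrite /weakrel orbC. Qed.

Lemma conn_rho F x y : acyclic F -> connect (weakrel F) x y = (rho F x == rho F y).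
Proof.
move=> Ha; have sym := sym_connect_sym (weakrel_sym F).
apply/idP/eqP.
  move=> Hc.
  have Hcl : closed (weakrel F) [pred z | rho F z == rho F x].
    move=> a b; rewrite /weakrel /arcrel !inE => /orP [] /eqP Hab;
     by rewrite (rho_step Ha Hab).
  by have := closed_connect Hcl Hc; rewrite !inE eqxx => /esym/eqP.
have Hc : forall z, connect (weakrel F) z (rho F z).
  move=> z; apply: (connect_sub _ (conn_iter F z (#|T|))).
  by move=> a b Hab; apply: connect1; rewrite /weakrel Hab.
move=> E; apply: connect_trans (Hc x) _; rewrite E sym; exact: Hc.
Qed.

Lemma ntrees_roots F : acyclic F -> ntrees F = #|rootset F|.
Proof.
move=> Ha; have sym := sym_connect_sym (weakrel_sym F).
rewrite /ntrees.
have -> : n_comp (weakrel F) T = #|[set x | roots (weakrel F) x]|.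
  by apply: eq_card => x; rewrite !inE andbT.
have -> : [set x | roots (weakrel F) x] =
          [set fingraph.root (weakrel F) r | r in rootset F].
  apply/setP => x; rewrite inE; apply/idP/imsetP.
    move=> /eqP Hx; exists (rho F x); first by rewrite inE rho_root.
    rewrite -{1}Hx; apply/(fingraph.rootP sym) => //.
    by rewrite conn_rho // (rho_fix (rho_root x Ha)).
  by move=> [r _ ->]; apply: roots_root.
apply: card_in_imset.
move=> r1 r2; rewrite !inE => /eqP H1 /eqP H2 /(fingraph.rootP sym).
by rewrite conn_rho // !rho_fix // => /eqP.
Qed.

End Forest.

Section Over.
Variables (T : finType) (R : realFieldType) (adj : rel T) (v : T -> T -> R).
Implicit Types (F G H P Q : sgraph T) (S X U Z : {set T}).

Lemma overE P Q S i : override P Q S i = if i \in S then Q i else P i.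
Proof. by rewrite /override ffunE. Qed.

Lemma override_acyclic P Q S Z :
  acyclic P -> acyclic Q ->
  (forall i j, i \in S -> Q i = Some j -> j \notin S -> j \in Z) ->
  (forall i j, i \in Z -> P i = Some j -> j \in Z) ->
  (forall i, i \in Z -> i \notin S) ->
  acyclic (override P Q S).
Proof.
move=> aP aQ HQ HP HZ.
pose M := #|T|.+1.
apply: (@height_acyclic _ _ (fun i => if i \in S then (reachc Q i + M)%N
   else if i \in Z then reachc P i else (reachc P i + M + M)%N)).
move=> i j; rewrite overE.
have hP := reachc_le P j; have hQ := reachc_le Q j.
case iS: (i \in S) => E.
  have := reachc_dec aQ E.
  case jS: (j \in S); first by lia.
  by rewrite (HQ i j iS E) ?jS //; lia.
have := reachc_dec aP E.
case iZ: (i \in Z).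
  by rewrite (HP i j iZ E) (negbTE (HZ j (HP i j iZ E))); lia.
by case: (j \in S); case: (j \in Z); lia.
Qed.

Lemma override_sub P Q S :
  subgraph_of_V adj P -> subgraph_of_V adj Q -> subgraph_of_V adj (override P Q S).
Proof.
move=> /forallP HP /forallP HQ; apply/forallP => i; rewrite overE.
by case: (i \in S); [apply: HQ | apply: HP].
Qed.

Lemma override_forest P Q S Z :
  is_forest adj P -> is_forest adj Q ->
  (forall i j, i \in S -> Q i = Some j -> j \notin S -> j \in Z) ->
  (forall i j, i \in Z -> P i = Some j -> j \in Z) ->
  (forall i, i \in Z -> i \notin S) ->
  is_forest adj (override P Q S).
Proof.
move=> /andP [sP aP] /andP [sQ aQ] h1 h2 h3.
by rewrite /is_forest override_sub //= (override_acyclic aP aQ h1 h2 h3).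
Qed.

Lemma roots_overI P Q S : rootset (override P Q S) :&: S = rootset Q :&: S.
Proof. by apply/setP => i; rewrite !inE overE; case: (i \in S); rewrite ?andbF ?andbT. Qed.

Lemma roots_overD P Q S : rootset (override P Q S) :\: S = rootset P :\: S.
Proof. by apply/setP => i; rewrite !inE overE; case: (i \in S). Qed.

Definition wt F (i : T) : R := if F i is Some j then v i j else 0.

Lemma UpsE F S : Ups v F S = \sum_(i in S) wt F i.
Proof. by []. Qed.

Lemma Ups_over P Q S :
  UpsT v (override P Q S) + Ups v P S = UpsT v P + Ups v Q S.
Proof.
rewrite /UpsT !UpsE (big_mkcond (fun i => i \in S) (wt P)) (big_mkcond (fun i => i \in S) (wt Q)).
rewrite !(big_mkcond (fun i => i \in setT)) -!big_split /=.
apply: eq_bigr => i _; rewrite !inE /wt overE.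
by case: (i \in S); rewrite ?addr0 ?add0r // addrC.
Qed.

Lemma Ups_eq F G S : (forall i, i \in S -> F i = G i) -> Ups v F S = Ups v G S.
Proof. by move=> E; apply: eq_bigr => i iS; rewrite /wt E. Qed.

Lemma Ups_split F U X : Ups v F U = Ups v F (U :&: X) + Ups v F (U :\: X).
Proof. by rewrite !UpsE (big_setID X). Qed.

Definition oleq (o : option R) (x : R) : bool := if o is Some p then p <= x else false.

Lemma omin_r a b x : oleq b x -> oleq (@omin R a b) x.
Proof. by case: a; case: b => //= p q; rewrite ge_min orbC => ->. Qed.

Lemma omin_l a b x : oleq (Some a) x -> oleq (@omin R (Some a) b) x.
Proof. by case: b => //= q; rewrite ge_min => ->. Qed.

Lemma big_omin_le (r : seq (sgraph T)) (Pr : pred (sgraph T)) (f : sgraph T -> R) G :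
  G \in r -> Pr G -> oleq (\big[@omin R/None]_(i <- r | Pr i) Some (f i)) (f G).
Proof.
elim: r => // x r IH; rewrite inE big_cons => /orP [/eqP <- -> | Gr PG].
  by apply: omin_l => /=.
by case: (Pr x); [apply: omin_r|]; apply: IH.
Qed.

Lemma phi_le j G : forest_k adj j G -> oleq (phi adj v j) (UpsT v G).
Proof. by move=> HG; apply: big_omin_le => //; rewrite mem_index_enum. Qed.

Lemma tilde_phi k G : tildeF adj v k G -> phi adj v k = Some (UpsT v G).
Proof. by move=> /andP [_ /eqP]. Qed.

Lemma tilde_forest k G : tildeF adj v k G -> is_forest adj G.
Proof. by move=> /andP [/andP [] ]. Qed.

Lemma tilde_ntrees k G : tildeF adj v k G -> ntrees G = k.
Proof. by move=> /andP [/andP [_ /eqP]]. Qed.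

Lemma tilde_of k F G : tildeF adj v k F -> is_forest adj G -> ntrees G = k ->
  UpsT v G = UpsT v F -> tildeF adj v k G.
Proof.
move=> HF fG nG E; rewrite /tildeF /forest_k fG nG eqxx /= (tilde_phi HF) E //.
Qed.

End Over.

Section Exch.
Variables (T : finType) (R : realFieldType) (adj : rel T) (v : T -> T -> R).
Implicit Types (F G H P Q : sgraph T) (S X U Z : {set T}).


Lemma gap_contra k H G1 G2 : gap_cond adj v k -> tildeF adj v k H ->
  forest_k adj k.-1 G1 -> forest_k adj k.+1 G2 ->
  UpsT v G1 + UpsT v G2 = UpsT v H + UpsT v H -> False.
Proof.
move=> gc HH /(phi_le v) h1 /(phi_le v) h2 E; move: gc.
rewrite /gap_cond (tilde_phi HH).
case: (phi adj v k.-1) h1 => // a /= h1.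
case: (phi adj v k.+1) h2 => // c /= h2.
move=> gc; lra.
Qed.

Lemma roots_tree G y (Pr : pred T) : acyclic G ->
  (#|rootset G :&: [set i | (rho G i == rho G y) && Pr i]| <= 1)%N.
Proof.
move=> aG; rewrite -(cards1 (rho G y)); apply: subset_leq_card.
apply/subsetP => i; rewrite !inE => /andP [/eqP Ri /andP [/eqP <- _]].
by rewrite rho_fix.
Qed.

Lemma exchange k H F2 y : gap_cond adj v k ->
  tildeF adj v k H -> tildeF adj v k F2 ->
  tildeF adj v k (override H F2
     [set i | (rho H i == rho H y) && (rho F2 i == rho F2 y)]).
Proof.
move=> gc tH tF2.
set S := [set i | _ && _].
have fH := tilde_forest tH; have fF := tilde_forest tF2.
have aH : acyclic H by case/andP: fH.
have aF : acyclic F2 by case/andP: fF.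
have f1 : is_forest adj (override H F2 S).
  apply: (override_forest (Z := [set i | rho H i != rho H y])) => //.
  - move=> i j; rewrite !inE => /andP [_ /eqP E1] E2.
    by rewrite (rho_step aF E2) E1 eqxx andbT.
  - by move=> i j; rewrite !inE => Hi E; rewrite (rho_step aH E).
  - by move=> i; rewrite !inE => /negbTE ->.
have f2 : is_forest adj (override F2 H S).
  apply: (override_forest (Z := [set i | rho F2 i != rho F2 y])) => //.
  - move=> i j; rewrite !inE => /andP [/eqP E1 _] E2.
    by rewrite (rho_step aH E2) E1 eqxx.
  - by move=> i j; rewrite !inE => Hi E; rewrite (rho_step aF E).
  - by move=> i; rewrite !inE => /negbTE ->; rewrite andbF.
have a1 : acyclic (override H F2 S) by case/andP: f1.
have a2 : acyclic (override F2 H S) by case/andP: f2.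
have rH : (#|rootset H :&: S| <= 1)%N by apply: roots_tree.
have rF : (#|rootset F2 :&: S| <= 1)%N.
  have -> : S = [set i | (rho F2 i == rho F2 y) && (rho H i == rho H y)].
    by apply/setP => i; rewrite !inE andbC.
  by apply: roots_tree.
have nH := tilde_ntrees tH; have nF := tilde_ntrees tF2.
rewrite (ntrees_roots aH) -(cardsID S) in nH.
rewrite (ntrees_roots aF) -(cardsID S) in nF.
have n1 : ntrees (override H F2 S) = (#|rootset F2 :&: S| + #|rootset H :\: S|)%N.
  by rewrite (ntrees_roots a1) -(cardsID S) roots_overI roots_overD.
have n2 : ntrees (override F2 H S) = (#|rootset H :&: S| + #|rootset F2 :\: S|)%N.
  by rewrite (ntrees_roots a2) -(cardsID S) roots_overI roots_overD.
have W1 := Ups_over v H F2 S; have W2 := Ups_over v F2 H S.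
have pH := tilde_phi tH; rewrite (tilde_phi tF2) in pH; case: pH => pH.
have Wsum : UpsT v (override H F2 S) + UpsT v (override F2 H S) =
            UpsT v H + UpsT v H by lra.
have fk : forall G, is_forest adj G -> forall j, ntrees G = j -> forest_k adj j G.
  by move=> G fG j nG; rewrite /forest_k fG nG eqxx.
case: (ltngtP #|rootset H :&: S| #|rootset F2 :&: S|) => c.
- exfalso; apply: (gap_contra gc tH (fk _ f2 k.-1 _) (fk _ f1 k.+1 _)); first lia; first lia.
  by rewrite addrC.
- exfalso; apply: (gap_contra gc tH (fk _ f1 k.-1 _) (fk _ f2 k.+1 _)) => //; lia.
- have e1 : ntrees (override H F2 S) = k by lia.
  have e2 : ntrees (override F2 H S) = k by lia.
  have := phi_le v (fk _ f1 k e1); have := phi_le v (fk _ f2 k e2).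
  rewrite (tilde_phi tH) /= => h2 h1.
  apply: (tilde_of tH f1 e1); lra.
Qed.

End Exch.

Section Main.
Variables (T : finType) (R : realFieldType) (adj : rel T) (v : T -> T -> R).
Implicit Types (F G H P Q : sgraph T) (S X U Z : {set T}).

Lemma in_Ak_I k A B : in_Ak adj v k A -> in_Ak adj v k B -> in_Ak adj v k (A :&: B).
Proof.
move=> hA hB S HS Hg.
have hA' := hA S HS Hg; have hB' := hB S HS Hg.
case: HS => HT HC HU.
have -> : A :&: B = ~: (~: A :|: ~: B) by rewrite setCU !setCK.
exact: (HC _ (HU _ _ (HC _ hA') (HC _ hB'))).
Qed.

Lemma gen_in k B : gen adj v k B -> in_Ak adj v k B.
Proof. by move=> gB S _; apply. Qed.

Lemma atom_same k U G u x : atom adj v k U -> tildeF adj v k G ->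
  u \in U -> x \in U -> rho G x = rho G u.
Proof.
move=> [inU _ mn] tG uU xU.
have aG : acyclic G by case/andP: (tilde_forest tG).
have gB : gen adj v k (tree_set G u) by exists G, u.
case: (mn _ (in_Ak_I inU (gen_in gB)) (subsetIl _ _)) => E.
  by move: (in_set0 u); rewrite -E !inE uU connect0.
have : x \in U :&: tree_set G u by rewrite E.
by rewrite !inE conn_rho // => /andP [_ /eqP].
Qed.

Lemma atom_sep k U u y : atom adj v k U -> u \in U -> y \notin U ->
  exists G, tildeF adj v k G /\ rho G y != rho G u.
Proof.
move=> [inU _ _] uU yU.
case: (boolP [exists G, tildeF adj v k G && (rho G y != rho G u)]).
  by move=> /existsP [G /andP [tG ne]]; exists G.
move=> /existsPn Hn; exfalso.
pose S := [set A : {set T} | (y \in A) == (u \in A)].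
have HS : is_algebra S.
  split.
  - by rewrite inE !inE.
  - by move=> A; rewrite !inE => /eqP E; rewrite E.
  - by move=> A B; rewrite !inE => /eqP E1 /eqP E2; rewrite E1 E2.
have US : U \in S.
  apply: (inU S HS) => B [G [x [tG ->]]].
  have aG : acyclic G by case/andP: (tilde_forest tG).
  have := Hn G; rewrite tG /= negbK => /eqP E.
  by rewrite inE !inE !conn_rho // E.
by move: US; rewrite inE uU (negbTE yU).
Qed.

Definition closedX F U X :=
  X \subset U /\ forall i j, i \in U -> j \in U -> F i = Some j -> (i \in X) = (j \in X).

Definition Ent H X : {set T} :=
  [set i | (i \notin X) && (if H i is Some j then j \in X else false)].

Lemma main1 k F U X : gap_cond adj v k -> tildeF adj v k F ->
  atom adj v k U -> closedX F U X ->
  exists H, [/\ tildeF adj v k H, (forall i, i \in U -> H i = F i) & ~ enters H X].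
Proof.
move=> gc tF atU [XU cX].
suff: forall n H, tildeF adj v k H -> (forall i, i \in U -> H i = F i) ->
  (#|Ent H X| <= n)%N ->
  exists H, [/\ tildeF adj v k H, (forall i, i \in U -> H i = F i) & ~ enters H X].
  by move=> /(_ _ F tF (fun _ _ => erefl) (leqnn _)).
elim => [|n IH] H tH HU cn.
  exists H; split=> // [[i [j [Hij jX iX]]]].
  have : i \in Ent H X by rewrite inE iX Hij jX.
  by move: cn; rewrite leqn0 cards_eq0 => /eqP ->; rewrite inE.
case: (set_0Vmem (Ent H X)) => [E0 | [y yE]].
  exists H; split=> // [[i [j [Hij jX iX]]]].
  have : i \in Ent H X by rewrite inE iX Hij jX.
  by rewrite E0 inE.
move: (yE); rewrite inE => /andP [yX].
case Hy: (H y) => [z|] // zX.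
have zU : z \in U by apply: (subsetP XU).
have yU : y \notin U.
  apply/negP => yU; move: (Hy); rewrite HU // => Fy.
  by move: yX; rewrite (cX _ _ yU zU Fy) zX.
have [G [tG ne]] := atom_sep atU zU yU.
have aG : acyclic G by case/andP: (tilde_forest tG).
set S := [set i | (rho H i == rho H y) && (rho G i == rho G y)].
have t1 := exchange y gc tH tG; rewrite -/S in t1.
have notS : forall i, i \in U -> i \notin S.
  move=> i iU; rewrite inE (atom_same atU tG zU iU); apply/negP => /andP [_ /eqP E].
  by move: ne; rewrite E eqxx.
have H1U : forall i, i \in U -> override H G S i = F i.
  by move=> i iU; rewrite overE (negbTE (notS i iU)) HU.
apply: (IH _ t1 H1U).
have : (#|Ent (override H G S) X| < #|Ent H X|)%N.
  apply: proper_card; apply/properP; split.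
    apply/subsetP => i; rewrite !inE overE => /andP [iX].
    case iS: (i \in S); last by rewrite iX.
    case Gi: (G i) => [j|] // jX; exfalso.
    move: iS; rewrite inE => /andP [_ /eqP E].
    have jU : j \in U by apply: (subsetP XU).
    by move: ne; rewrite -E -(rho_step aG Gi) (atom_same atU tG zU jU) eqxx.
  exists y; first exact: yE.
  rewrite !inE overE yX /=.
  have -> : y \in S by rewrite inE !eqxx.
  case Gy: (G y) => [j|] //; apply/negP => jX.
  have jU : j \in U by apply: (subsetP XU).
  by move: ne; rewrite -(rho_step aG Gy) (atom_same atU tG zU jU) eqxx.
by move: cn; lia.
Qed.

End Main.

Section Final.
Variables (T : finType) (R : realFieldType) (adj : rel T) (v : T -> T -> R).
Implicit Types (F G H P Q : sgraph T) (S X U Z : {set T}).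

Lemma ntrees_over k H G X : tildeF adj v k H -> is_forest adj G ->
  is_forest adj (override H G X) ->
  (forall i, i \in X -> H i != None) -> (forall i, i \in X -> G i != None) ->
  ntrees (override H G X) = k.
Proof.
move=> tH fG fO nH nG.
have aH : acyclic H by case/andP: (tilde_forest tH).
have aO : acyclic (override H G X) by case/andP: fO.
rewrite -(tilde_ntrees tH) (ntrees_roots aH) (ntrees_roots aO).
rewrite -(cardsID X (rootset H)) -(cardsID X (rootset (override H G X))).
rewrite roots_overI roots_overD.
have E : forall P, (forall i, i \in X -> P i != None) -> rootset P :&: X = set0.
  move=> P nP; apply/setP => i; rewrite !inE.
  by case iX: (i \in X); rewrite ?andbF // andbT; apply/negbTE; apply: nP.
by rewrite (E _ nH) (E _ nG).
Qed.

Lemma no_enter_forest F G X : is_forest adj F -> is_forest adj G -> ~ enters F X ->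
  is_forest adj (override F G X).
Proof.
move=> fF fG ne; apply: (override_forest (Z := ~: X)) => //.
- by move=> i j _ _; rewrite inE.
- move=> i j; rewrite !inE => iX Fij; apply/negP => jX; apply: ne.
  by exists i, j.
- by move=> i; rewrite inE.
Qed.

Lemma part3 k F U X : gap_cond adj v k -> tildeF adj v k F ->
  atom adj v k U -> unlabeled adj v k U -> closedX F U X ->
  forall G, is_forest adj G -> (forall i, i \in X -> G i != None) ->
  Ups v F X <= Ups v G X /\
  (Ups v G X = Ups v F X -> exists F', tildeF adj v k F' /\
       (forall i, i \in X -> G i = F' i)).
Proof.
move=> gc tF atU unl cX G fG nG.
have [H [tH HU neH]] := main1 gc tF atU cX.
have XU := cX.1.
have HX : forall i, i \in X -> H i = F i by move=> i iX; apply: HU; apply: (subsetP XU).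
have nH : forall i, i \in X -> H i != None.
  by move=> i iX; rewrite HX //; exact: (unl _ i tF (subsetP XU i iX)).
have fO := no_enter_forest (tilde_forest tH) fG neH.
have nO := ntrees_over tH fG fO nH nG.
have fk : forest_k adj k (override H G X) by rewrite /forest_k fO nO eqxx.
have := phi_le v fk; rewrite (tilde_phi tH) /= => le.
have W := Ups_over v H G X.
have EH : Ups v H X = Ups v F X by apply: Ups_eq.
split; first by lra.
move=> E; exists (override H G X); split.
  by apply: (tilde_of tH fO nO); lra.
by move=> i iX; rewrite overE iX.
Qed.

End Final.

Theorem theorem3 (T : finType) (R : realFieldType) (adj : rel T)
    (v : T -> T -> R) (k : nat) (F : sgraph T) (U X : {set T}) :
  (exists Tr : sgraph T, forest_k adj 1 Tr) ->
  (1 <= k <= #|T| - 1)%N ->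
  gap_cond adj v k ->
  tildeF adj v k F ->
  atom adj v k U ->
  unlabeled adj v k U ->
  is_component F U X ->
  (* (1) *)
  (exists H : sgraph T, [/\ tildeF adj v k H,
      (forall i, i \in X -> H i = F i) & ~ enters H X]) /\
  (* (2) *)
  (forall G : sgraph T, tildeF adj v k G ->
     [/\ Ups v G X = Ups v F X,
         (~ enters F X -> is_forest adj (override F G X)) &
         (is_forest adj (override F G X) -> tildeF adj v k (override F G X))]) /\
  (* (3) *)
  (forall G : sgraph T, is_forest adj G ->
     (forall i, i \in X -> G i != None) ->
     Ups v F X <= Ups v G X /\
     (Ups v G X = Ups v F X ->
        exists F' : sgraph T, tildeF adj v k F' /\
          (forall i, i \in X -> G i = F' i))).
Proof.
move=> _ _ gc tF atU unl [x xU ->].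
set X0 := [set y | _].
have XU : X0 \subset U.
  have Hpath : forall a p, a \in U -> path (indrel F U) a p -> last a p \in U.
    move=> a p; elim: p a => //= c p IH a aU /andP [/and3P [_ cU _] pth].
    exact: IH pth.
  apply/subsetP => y; rewrite inE => /connectP [p pth ->]; exact: Hpath.
have cX : closedX F U X0.
  split => // i j iU jU Fij; rewrite !inE.
  have e1 : indrel F U i j by rewrite /indrel iU jU /weakrel /arcrel Fij eqxx.
  have e2 : indrel F U j i by rewrite /indrel iU jU /weakrel /arcrel Fij eqxx orbT.
  apply/idP/idP => h; apply: connect_trans h _; exact: connect1.
have cUX : closedX F U (U :\: X0).
  split; first exact: subsetDl.
  move=> i j iU jU Fij; rewrite !inE iU jU /= -!(in_set (fun y => connect (indrel F U) x y)).
  by rewrite -/X0 (cX.2 i j iU jU Fij).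
have cU : forall G, closedX G U U by move=> G; split => // i j iU jU _; rewrite iU jU.
have nU : forall G i, tildeF adj v k G -> i \in U -> G i != None.
  by move=> G i tG iU; apply: unl.
split.
  have [H [tH HU neH]] := main1 gc tF atU cX.
  exists H; split => // i iX; apply: HU; exact: (subsetP XU).
split; last by move=> G fG nG; apply: (part3 gc tF atU unl cX fG nG).
move=> G tG.
have fG := tilde_forest tG; have fF := tilde_forest tF.
have a1 := (part3 gc tF atU unl cX fG (fun i iX => nU G i tG (subsetP XU i iX))).1.
have a2 := (part3 gc tF atU unl cUX fG (fun i iX => nU G i tG (subsetP (subsetDl U X0) i iX))).1.
have a3 := (part3 gc tG atU unl (cU G) fF (fun i iU => nU F i tF iU)).1.
have sF := Ups_split v F U X0; have sG := Ups_split v G U X0.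
have UX : U :&: X0 = X0 by apply/setIidPr.
rewrite UX in sF sG.
have EX : Ups v G X0 = Ups v F X0 by lra.
split => //.
  by apply: no_enter_forest.
move=> fO.
have nF : forall i, i \in X0 -> F i != None by move=> i iX; apply: nU => //; exact: (subsetP XU).
have nG : forall i, i \in X0 -> G i != None by move=> i iX; apply: nU => //; exact: (subsetP XU).
have nO := ntrees_over tF fG fO nF nG.
apply: (tilde_of tF fO nO).
have W := Ups_over v F G X0; lra.
Qed.
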